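(* Let $\mathcal C$ be a Markov category in which, for every object $X$, the copy morphism $\mathrm{copy}_X$ is an initial dilation of $\mathrm{id}_X$. Then every non-creative morphism of $\mathcal C$ is deterministic, and the class of non-creative morphisms equals the class of deterministic morphisms if and only if $\mathcal C$ is positive.
   Context: A Markov category is a symmetric monoidal category $(\mathcal C,\otimes,I)$ with commutative comonoids $\mathrm{copy}_X\colon X\to X\otimes X$, $\mathrm{del}_X\colon X\to I$ compatible with $\otimes$, with $I$ terminal. $f\colon A\to X$ is deterministic if $\mathrm{copy}_X\circ f=(f\otimes f)\circ\mathrm{copy}_A$. $\mathcal C$ is positive if for all $f\colon X\to Y$, $g\colon Y\to Z$ with $g\circ f$ deterministic, $(\mathrm{id}_Y\otimes g)\circ\mathrm{copy}_Y\circ f=(f\otimes (g\circ f))\circ\mathrm{copy}_X$. A dilation of $p\colon A\to X$ is $\pi\colon A\to X\otimes E$ with $(\mathrm{id}_X\otimes\mathrm{del}_E)\circ\pi=p$. For a dilation $\pi\colon A\to X\otimes E$ and $f_1,f_2\colon E\to E'$, these are $\pi$-dilationally equal if for every dilation $\rho\colon A\to X\otimes E\otimes F$ of $\pi$, $(\mathrm{id}_X\otimes f_1\otimes\mathrm{id}_F)\circ\rho=(\mathrm{id}_X\otimes f_2\otimes\mathrm{id}_F)\circ\rho$. A dilation $\pi\colon A\to X\otimes E$ of $p$ is initial if for every dilation $\pi'\colon A\to X\otimes E'$ of $p$ there is $f\colon E\to E'$ with $(\mathrm{id}_X\otimes f)\circ\pi=\pi'$, unique up to $\pi$-dilational equality.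 A morphism $p\colon A\to X$ is non-creative if every dilation $\pi\colon A\to X\otimes E$ of $p$ equals $(p\otimes\mathrm{id}_E)\circ\iota$ for some dilation $\iota\colon A\to A\otimes E$ of $\mathrm{id}_A$. *)

(* Defs.v *)
(* The symmetric monoidal structure is NOT assumed strict:
   associators and unitors are explicit, with the usual coherence axioms. *)

Set Implicit Arguments.
Unset Strict Implicit.

Record MarkovCat := {
  Ob : Type;
  Hom : Ob -> Ob -> Type;
  comp : forall A B C : Ob, Hom B C -> Hom A B -> Hom A C;
  idm : forall A : Ob, Hom A A;
  comp_assoc : forall A B C D (h : Hom C D) (g : Hom B C) (f : Hom A B),
      comp h (comp g f) = comp (comp h g) f;
  comp_id_l : forall A B (f : Hom A B), comp (idm B) f = f;
  comp_id_r : forall A B (f : Hom A B), comp f (idm A) = f;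

  tens : Ob -> Ob -> Ob;
  unit : Ob;
  tensm : forall A B C D : Ob, Hom A B -> Hom C D -> Hom (tens A C) (tens B D);
  tensm_id : forall A C, tensm (idm A) (idm C) = idm (tens A C);
  tensm_comp : forall A B E C D F (g : Hom B E) (f : Hom A B) (g' : Hom D F) (f' : Hom C D),
      tensm (comp g f) (comp g' f') = comp (tensm g g') (tensm f f');

  assoc : forall A B C, Hom (tens (tens A B) C) (tens A (tens B C));
  assoc_inv : forall A B C, Hom (tens A (tens B C)) (tens (tens A B) C);
  assoc_iso1 : forall A B C, comp (assoc_inv A B C) (assoc A B C) = idm _;
  assoc_iso2 : forall A B C, comp (assoc A B C) (assoc_inv A B C) = idm _;
  assoc_nat : forall A A' B B' C C' (f : Hom A A') (g : Hom B B') (h : Hom C C'),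
      comp (assoc A' B' C') (tensm (tensm f g) h) = comp (tensm f (tensm g h)) (assoc A B C);

  lunit : forall A, Hom (tens unit A) A;
  lunit_inv : forall A, Hom A (tens unit A);
  lunit_iso1 : forall A, comp (lunit_inv A) (lunit A) = idm _;
  lunit_iso2 : forall A, comp (lunit A) (lunit_inv A) = idm _;
  lunit_nat : forall A B (f : Hom A B),
      comp (lunit B) (tensm (idm unit) f) = comp f (lunit A);
  runit : forall A, Hom (tens A unit) A;
  runit_inv : forall A, Hom A (tens A unit);
  runit_iso1 : forall A, comp (runit_inv A) (runit A) = idm _;
  runit_iso2 : forall A, comp (runit A) (runit_inv A) = idm _;
  runit_nat : forall A B (f : Hom A B),
      comp (runit B) (tensm f (idm unit)) = comp f (runit A);

  pentagon : forall A B C D,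
      comp (assoc A B (tens C D)) (assoc (tens A B) C D)
      = comp (tensm (idm A) (assoc B C D))
             (comp (assoc A (tens B C) D) (tensm (assoc A B C) (idm D)));
  triangle : forall A B,
      comp (tensm (idm A) (lunit B)) (assoc A unit B) = tensm (runit A) (idm B);

  swap : forall A B, Hom (tens A B) (tens B A);
  swap_nat : forall A A' B B' (f : Hom A A') (g : Hom B B'),
      comp (swap A' B') (tensm f g) = comp (tensm g f) (swap A B);
  swap_invol : forall A B, comp (swap B A) (swap A B) = idm _;
  hexagon : forall A B C,
      comp (assoc B C A) (comp (swap A (tens B C)) (assoc A B C))
      = comp (tensm (idm B) (swap A C)) (comp (assoc B A C) (tensm (swap A B) (idm C)));

  copy : forall X, Hom X (tens X X);
  del : forall X, Hom X unit;
  copy_counit_l : forall X, comp (tensm (del X) (idm X)) (copy X) = lunit_inv X;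
  copy_counit_r : forall X, comp (tensm (idm X) (del X)) (copy X) = runit_inv X;
  copy_coassoc : forall X,
      comp (assoc X X X) (comp (tensm (copy X) (idm X)) (copy X))
      = comp (tensm (idm X) (copy X)) (copy X);
  copy_comm : forall X, comp (swap X X) (copy X) = copy X;

  copy_tens : forall X Y,
      copy (tens X Y)
      = comp (assoc_inv X Y (tens X Y))
          (comp (tensm (idm X) (assoc Y X Y))
            (comp (tensm (idm X) (tensm (swap X Y) (idm Y)))
              (comp (tensm (idm X) (assoc_inv X Y Y))
                (comp (assoc X X (tens Y Y)) (tensm (copy X) (copy Y))))));
  del_tens : forall X Y, del (tens X Y) = comp (lunit unit) (tensm (del X) (del Y));
  copy_unit : copy unit = lunit_inv unit;
  del_unit : del unit = idm unit;

  unit_terminal : forall A (f : Hom A unit), f = del A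
}.

Arguments Hom : clear implicits.
Arguments comp {m A B C} _ _.
Arguments idm {m} A.
Arguments tens {m} _ _.
Arguments unit {m}.
Arguments tensm {m A B C D} _ _.
Arguments assoc {m} A B C.
Arguments assoc_inv {m} A B C.
Arguments lunit {m} A.
Arguments lunit_inv {m} A.
Arguments runit {m} A.
Arguments runit_inv {m} A.
Arguments swap {m} A B.
Arguments copy {m} X.
Arguments del {m} X.

Section Defs.
Variable C : MarkovCat.

Definition deterministic {A X : Ob C} (f : Hom C A X) : Prop :=
  comp (copy X) f = comp (tensm f f) (copy A).

Definition positive : Prop :=
  forall (X Y Z : Ob C) (f : Hom C X Y) (g : Hom C Y Z),
    deterministic (comp g f) ->
    comp (comp (tensm (idm Y) g) (copy Y)) f = comp (tensm f (comp g f)) (copy X).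

Definition is_dilation {A X E : Ob C} (p : Hom C A X) (pi : Hom C A (tens X E)) : Prop :=
  comp (runit X) (comp (tensm (idm X) (del E)) pi) = p.

Definition dil_equal {A X E E' : Ob C} (pi : Hom C A (tens X E)) (f1 f2 : Hom C E E') : Prop :=
  forall (F : Ob C) (rho : Hom C A (tens (tens X E) F)),
    is_dilation pi rho ->
    comp (tensm (tensm (idm X) f1) (idm F)) rho = comp (tensm (tensm (idm X) f2) (idm F)) rho.

Definition initial_dilation {A X E : Ob C} (p : Hom C A X) (pi : Hom C A (tens X E)) : Prop :=
  is_dilation p pi /\
  forall (E' : Ob C) (pi' : Hom C A (tens X E')),
    is_dilation p pi' ->
    (exists f : Hom C E E', comp (tensm (idm X) f) pi = pi') /\
    (forall f g : Hom C E E',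
        comp (tensm (idm X) f) pi = pi' ->
        comp (tensm (idm X) g) pi = pi' ->
        dil_equal pi f g).

Definition non_creative {A X : Ob C} (p : Hom C A X) : Prop :=
  forall (E : Ob C) (pi : Hom C A (tens X E)),
    is_dilation p pi ->
    exists iota : Hom C A (tens A E),
      is_dilation (idm A) iota /\ pi = comp (tensm p (idm E)) iota.

End Defs.

Arguments deterministic {C A X} f.
Arguments is_dilation {C A X E} p pi.
Arguments dil_equal {C A X E E'} pi f1 f2.
Arguments initial_dilation {C A X E} p pi.
Arguments non_creative {C A X} p.

(* Main.v *)
Require Import Defs.

Local Notation "g ∘ f" := (comp g f) (at level 40, left associativity).
Local Notation "f ⊗ g" := (tensm f g) (at level 35, no associativity).

Lemma ext {C : MarkovCat} {A B D : Ob C} {x : Hom C B D} {y : Hom C A B} {z : Hom C A D} :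
  x ∘ y = z -> forall E (w : Hom C E A), x ∘ (y ∘ w) = z ∘ w.
Proof. intros H E w. rewrite comp_assoc, H. reflexivity. Qed.

Ltac ra := repeat rewrite <- comp_assoc.
Ltac inst H := repeat (match type of H with forall x : ?T, _ =>
  let e := fresh in evar (e : T); specialize (H e); subst e end).
Ltac rw L := let H := fresh in epose proof L as H; inst H;
  first [ rewrite H | rewrite (ext H) ]; clear H; ra.
Ltac rwr L := let H := fresh in epose proof L as H; inst H;
  first [ rewrite <- H | rewrite (ext (eq_sym H)) ]; clear H; ra.
Ltac ra0 := repeat rewrite <- comp_assoc.
Ltac sg := match goal with |- ?G => idtac G end.

Lemma tsl {C : MarkovCat} {A B X Y : Ob C} (f : Hom C A B) (g : Hom C X Y) :
  f ⊗ g = (f ⊗ idm Y) ∘ (idm A ⊗ g).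
Proof. rewrite <- tensm_comp, comp_id_l, comp_id_r. reflexivity. Qed.
Lemma tsr {C : MarkovCat} {A B X Y : Ob C} (f : Hom C A B) (g : Hom C X Y) :
  f ⊗ g = (idm B ⊗ g) ∘ (f ⊗ idm X).
Proof. rewrite <- tensm_comp, comp_id_l, comp_id_r. reflexivity. Qed.

Lemma mono_r {C : MarkovCat} {A B W : Ob C} (i : Hom C A B) (j : Hom C B A) (x y : Hom C B W) :
  i ∘ j = idm B -> x ∘ i = y ∘ i -> x = y.
Proof. intros H1 H2. rewrite <- (comp_id_r x), <- (comp_id_r y), <- H1, !comp_assoc, H2. reflexivity. Qed.
Lemma epi_l {C : MarkovCat} {A B W : Ob C} (i : Hom C A B) (j : Hom C B A) (x y : Hom C W A) :
  j ∘ i = idm A -> i ∘ x = i ∘ y -> x = y.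
Proof. intros H1 H2. rewrite <- (comp_id_l x), <- (comp_id_l y), <- H1, <- !comp_assoc, H2. reflexivity. Qed.

Lemma faith_r {C : MarkovCat} {A B : Ob C} (f g : Hom C A B) : f ⊗ idm unit = g ⊗ idm unit -> f = g.
Proof. intros H. apply (mono_r (runit A) (runit_inv A)). apply runit_iso2.
  rewrite <- !runit_nat, H. reflexivity. Qed.
Lemma faith_l {C : MarkovCat} {A B : Ob C} (f g : Hom C A B) : idm unit ⊗ f = idm unit ⊗ g -> f = g.
Proof. intros H. apply (mono_r (lunit A) (lunit_inv A)). apply lunit_iso2.
  rewrite <- !lunit_nat, H. reflexivity. Qed.

Lemma assoc_inv_nat {C : MarkovCat} {A A' B B' X X' : Ob C} (f : Hom C A A') (g : Hom C B B') (h : Hom C X X') :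
  assoc_inv A' B' X' ∘ (f ⊗ (g ⊗ h)) = ((f ⊗ g) ⊗ h) ∘ assoc_inv A B X.
Proof. apply (mono_r (assoc A B X) (assoc_inv A B X)). apply assoc_iso2.
  ra. rwr assoc_nat. rw assoc_iso1. rw assoc_iso1. rewrite comp_id_l, comp_id_r. reflexivity. Qed.

Lemma lunit_inv_nat {C : MarkovCat} {A B : Ob C} (f : Hom C A B) :
  (idm unit ⊗ f) ∘ lunit_inv A = lunit_inv B ∘ f.
Proof. apply (epi_l (lunit B) (lunit_inv B)). apply lunit_iso1.
  ra. rw lunit_nat. rw lunit_iso2. rw lunit_iso2. rewrite comp_id_r, comp_id_l. reflexivity. Qed.
Lemma runit_inv_nat {C : MarkovCat} {A B : Ob C} (f : Hom C A B) :
  (f ⊗ idm unit) ∘ runit_inv A = runit_inv B ∘ f.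
Proof. apply (epi_l (runit B) (runit_inv B)). apply runit_iso1.
  ra. rw runit_nat. rw runit_iso2. rw runit_iso2. rewrite comp_id_r, comp_id_l. reflexivity. Qed.

Lemma kelly2 {C : MarkovCat} (A B : Ob C) :
  (idm A ⊗ runit B) ∘ assoc A B unit = runit (tens A B).
Proof.
  apply faith_r. apply (epi_l (assoc A B unit) (assoc_inv A B unit)). apply assoc_iso1.
  rewrite <- triangle. rewrite <- tensm_id. ra. rw assoc_nat. rewrite pentagon.
  ra. rwr tensm_comp. rewrite comp_id_l, triangle. rwr assoc_nat. rwr tensm_comp. rewrite comp_id_l. reflexivity.
Qed.

Lemma id_tc {C : MarkovCat} {A X Y Z : Ob C} (g : Hom C Y Z) (f : Hom C X Y) :
  idm A ⊗ (g ∘ f) = (idm A ⊗ g) ∘ (idm A ⊗ f).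
Proof. rewrite <- tensm_comp, comp_id_l. reflexivity. Qed.
Lemma tc_id {C : MarkovCat} {A X Y Z : Ob C} (g : Hom C Y Z) (f : Hom C X Y) :
  (g ∘ f) ⊗ idm A = (g ⊗ idm A) ∘ (f ⊗ idm A).
Proof. rewrite <- tensm_comp, comp_id_l. reflexivity. Qed.

Lemma kelly1 {C : MarkovCat} (A B : Ob C) :
  lunit (tens A B) ∘ assoc unit A B = lunit A ⊗ idm B.
Proof.
  apply faith_l.
  apply (mono_r (assoc unit (tens unit A) B) (assoc_inv unit (tens unit A) B)). apply assoc_iso2.
  apply (mono_r (assoc unit unit A ⊗ idm B) (assoc_inv unit unit A ⊗ idm B)).
  { rewrite <- tensm_comp, assoc_iso2, comp_id_l, tensm_id. reflexivity. }
  ra. rewrite id_tc. ra. rwr pentagon. rw triangle. rewrite <- tensm_id. rwr assoc_nat.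
  rwr assoc_nat. rwr tensm_comp. rewrite triangle, comp_id_l. reflexivity.
Qed.

Lemma kelly1' {C : MarkovCat} (A B : Ob C) :
  (lunit A ⊗ idm B) ∘ assoc_inv unit A B = lunit (tens A B).
Proof. rewrite <- kelly1. ra. rewrite assoc_iso2, comp_id_r. reflexivity. Qed.
Lemma kelly2' {C : MarkovCat} (A B : Ob C) :
  runit (tens A B) ∘ assoc_inv A B unit = idm A ⊗ runit B.
Proof. rewrite <- kelly2. ra. rewrite assoc_iso2, comp_id_r. reflexivity. Qed.

Lemma inner {C : MarkovCat} (X E : Ob C) :
  (idm E ⊗ (idm X ⊗ del E)) ∘ (assoc E X E ∘ ((swap X E ⊗ idm E) ∘ assoc_inv X E E))
  = assoc E X unit ∘ ((swap X E ⊗ idm unit) ∘ (assoc_inv X E unit ∘ (idm X ⊗ (idm E ⊗ del E)))).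
Proof.
  rwr assoc_nat. rwr tensm_comp. rewrite comp_id_r, tensm_id, comp_id_l.
  rewrite (tsl (swap X E) (del E)). ra. rewrite <- (tensm_id X E). rwr @assoc_inv_nat. reflexivity.
Qed.

Lemma key {C : MarkovCat} (X E : Ob C) :
  (lunit E ∘ (del X ⊗ idm E)) ⊗ (runit X ∘ (idm X ⊗ del E)) ∘ copy (tens X E) = swap X E.
Proof.
  rewrite tensm_comp, copy_tens. ra.
  rwr @assoc_inv_nat. rwr @id_tc. rwr @id_tc. rwr tensm_comp. rewrite comp_id_r.
  rewrite inner.
  rewrite (comp_assoc (swap X E ⊗ idm unit)), (comp_assoc (assoc E X unit)).
  rewrite <- (comp_id_l (del X)). rw tensm_comp.
  rwr assoc_nat. rwr tensm_comp. rewrite copy_counit_l, copy_counit_r.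
  rewrite (tsr (lunit E) (runit X)). ra.
  rw @kelly1'. rw lunit_nat. rw @kelly1. rwr tensm_comp. rewrite lunit_iso2, comp_id_l.
  rw @kelly2. rw runit_nat. rw @kelly2'. rwr @id_tc. rewrite runit_iso2, tensm_id, comp_id_r.
  reflexivity.
Qed.

Lemma delf {C : MarkovCat} {A B : Ob C} (f : Hom C A B) :
  (del A ⊗ f) ∘ copy A = lunit_inv B ∘ f.
Proof. rewrite (tsr (del A) f). ra. rw copy_counit_l. rw @lunit_inv_nat. reflexivity. Qed.

Lemma nc_det {C : MarkovCat} (H : forall X : Ob C, initial_dilation (idm X) (copy X))
  {A X : Ob C} (p : Hom C A X) : non_creative p -> deterministic p.
Proof.
  intros Hnc. destruct (Hnc X (copy X ∘ p)) as [iota [Hi Heq]].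
  { unfold is_dilation. rw copy_counit_r. rw runit_iso2. apply comp_id_l. }
  destruct (H A) as [_ Hin]. destruct (proj1 (Hin X iota Hi)) as [f Hf].
  assert (Hpf : copy X ∘ p = (p ⊗ f) ∘ copy A).
  { rewrite Heq, <- Hf. ra. rwr tensm_comp. rewrite comp_id_l, comp_id_r. reflexivity. }
  assert (p = f).
  { apply (epi_l (lunit_inv X) (lunit X)). apply lunit_iso2.
    transitivity ((del X ⊗ idm X) ∘ (copy X ∘ p)).
    { rewrite comp_assoc, copy_counit_l. reflexivity. }
    rewrite Hpf. rwr tensm_comp. rewrite comp_id_l. rewrite (unit_terminal (del X ∘ p)). apply delf. }
  subst f. exact Hpf.
Qed.

Theorem lemma4p15 (C : MarkovCat) :
  (forall X : Ob C, initial_dilation (idm X) (copy X)) ->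
  (forall (A X : Ob C) (p : Hom C A X), non_creative p -> deterministic p) /\
  ((forall (A X : Ob C) (p : Hom C A X), non_creative p <-> deterministic p) <-> positive C).
Proof.
  intros H. assert (P1 : forall (A X : Ob C) (p : Hom C A X), non_creative p -> deterministic p)
    by (intros A X p; apply (nc_det H)).
  split; [exact P1|]. split.
  - intros Heqv. unfold positive. intros X Y Z f g Hd.
    destruct (proj2 (Heqv X Z (g ∘ f)) Hd Y ((g ⊗ idm Y) ∘ (copy Y ∘ f))) as [iota [Hi Heq]].
    { unfold is_dilation. ra. rwr tensm_comp. rewrite comp_id_l, comp_id_r.
      rewrite (tsl g (del Y)). ra. rw runit_nat. rw copy_counit_r. rw runit_iso2.
      rewrite comp_id_l. reflexivity. }
    destruct (H X) as [_ Hin]. destruct (proj1 (Hin Y iota Hi)) as [h Hh].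
    assert (Hpi : (g ⊗ idm Y) ∘ (copy Y ∘ f) = ((g ∘ f) ⊗ h) ∘ copy X).
    { rewrite Heq, <- Hh. ra. rwr tensm_comp. rewrite comp_id_l, comp_id_r. reflexivity. }
    assert (h = f).
    { apply (epi_l (lunit_inv Y) (lunit Y)). apply lunit_iso2.
      assert (E1 : (del Z ⊗ idm Y) ∘ ((g ⊗ idm Y) ∘ (copy Y ∘ f)) = lunit_inv Y ∘ f).
      { rwr tensm_comp. rewrite comp_id_l. rewrite (unit_terminal (del Z ∘ g)).
        rw copy_counit_l. reflexivity. }
      assert (E2 : (del Z ⊗ idm Y) ∘ ((g ⊗ idm Y) ∘ (copy Y ∘ f)) = lunit_inv Y ∘ h).
      { rewrite Hpi. rwr tensm_comp. rewrite comp_id_l.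
        rewrite (unit_terminal (del Z ∘ (g ∘ f))). apply delf. }
      rewrite <- E1, <- E2. reflexivity. }
    subst h.
    transitivity (swap Z Y ∘ ((g ⊗ idm Y) ∘ (copy Y ∘ f))).
    { rw swap_nat. rw copy_comm. ra. reflexivity. }
    rewrite Hpi. rw swap_nat. rw copy_comm. reflexivity.
  - intros Hpos A X p. split; [apply P1|]. intros Hd E pi Hpi0.
    assert (Hg : (runit X ∘ (idm X ⊗ del E)) ∘ pi = p).
    { rewrite <- comp_assoc. exact Hpi0. }
    assert (Hp := Hpos A (tens X E) X pi (runit X ∘ (idm X ⊗ del E))
                   ltac:(rewrite Hg; exact Hd)).
    rewrite Hg in Hp.
    assert (Hs : swap X E ∘ pi = (((lunit E ∘ (del X ⊗ idm E)) ∘ pi) ⊗ p) ∘ copy A).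
    { transitivity (((lunit E ∘ (del X ⊗ idm E)) ⊗ idm X) ∘
         ((idm (tens X E) ⊗ (runit X ∘ (idm X ⊗ del E))) ∘ copy (tens X E) ∘ pi)).
      - rewrite <- key. ra. rwr tensm_comp. rewrite comp_id_l, comp_id_r. reflexivity.
      - rewrite Hp. ra. rwr tensm_comp. rewrite comp_id_l. reflexivity. }
    assert (Hpi : pi = (p ⊗ ((lunit E ∘ (del X ⊗ idm E)) ∘ pi)) ∘ copy A).
    { transitivity (swap E X ∘ (swap X E ∘ pi)).
      { rewrite comp_assoc, swap_invol, comp_id_l. reflexivity. }
      rewrite Hs. rw swap_nat. rw copy_comm. reflexivity. }
    exists ((idm A ⊗ ((lunit E ∘ (del X ⊗ idm E)) ∘ pi)) ∘ copy A). split.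
    + unfold is_dilation. rwr @id_tc. rewrite (unit_terminal (del E ∘ _)).
      rw copy_counit_r. apply runit_iso2.
    + transitivity ((p ⊗ ((lunit E ∘ (del X ⊗ idm E)) ∘ pi)) ∘ copy A); [exact Hpi|]. ra. rwr tensm_comp. rewrite comp_id_l, comp_id_r. reflexivity.
Qed.
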